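(* Let $Q_1,Q_1',Q_2,Q_2'$ be finite quandles with $Q_1\approx Q_1'$ and $Q_2\approx Q_2'$. Then $Q_1\times Q_2\approx Q_1'\times Q_2'$.
   Context: A quandle is a set $X$ with a binary operation $*$ such that $a*a=a$; for all $b,c$ there is a unique $a$ with $a*b=c$; and $(a*b)*c=(a*c)*(b*c)$. The product quandle $Q_1\times Q_2$ has componentwise operation $(a,b)*(a',b')=(a*a',b*b')$. $\mathrm{Col}_Q(K)$ is the number of colorings of an oriented knot $K$ by $Q$ (colorings being maps from arcs of a diagram to $Q$ satisfying: over-arc colored $y$, incoming under-arc colored $x$ (fixed orientation convention) implies the other under-arc is colored $x*y$; equivalently homomorphisms from the fundamental quandle of $K$ to $Q$). For quandles $Q,Q'$, write $Q\approx Q'$ if $\mathrm{Col}_Q(K)=\mathrm{Col}_{Q'}(K)$ for every knot $K$. *)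

(* Defs.v *)
From mathcomp Require Import all_boot.
Set Implicit Arguments. Unset Strict Implicit. Unset Printing Implicit Defensive.

Definition is_quandle (T : finType) (op : T -> T -> T) : Prop :=
  [/\ (forall a, op a a = a),
      (forall b c, exists! a, op a b = c) &
      (forall a b c, op (op a b) c = op (op a c) (op b c))].

Definition prod_op (T1 T2 : finType) (op1 : T1 -> T1 -> T1) (op2 : T2 -> T2 -> T2)
  (x y : T1 * T2) : T1 * T2 := (op1 x.1 y.1, op2 x.2 y.2).

(** Knots are presented as closures of braids (Alexander's theorem).
    A braid word on m strands is a sequence of letters (i, s): the generator
    sigma_{i+1} (positions i and i+1, 0-based) if s = true, its inverse if
    s = false. *)
Definition braid_letter := (nat * bool)%type.

Definition swap_pos (i p : nat) : nat :=
  if p == i then i.+1 else if p == i.+1 then i else p.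

Definition braid_perm (w : seq braid_letter) (p : nat) : nat :=
  foldl (fun q l => swap_pos l.1 q) p w.

(** The closure of the braid word w on m strands is a knot (one component). *)
Definition is_knot_braid (m : nat) (w : seq braid_letter) : bool :=
  [&& 0 < m, all (fun l : braid_letter => l.1.+1 < m) w &
      [forall j : 'I_m, [exists k : 'I_m, iter k (braid_perm w) 0 == j]]].

(** Coloring rule across the crossing sigma_{i+1}: the colors x of the strands
    before the crossing and y after satisfy
    y_i = x_{i+1}, y_{i+1} = x_i * x_{i+1}, y_j = x_j otherwise. *)
Definition sigma_rel (T : finType) (op : T -> T -> T) (m i : nat)
  (x y : {ffun 'I_m -> T}) : bool :=
  [forall j : 'I_m, forall j' : 'I_m,
     ((val j == i) && (val j' == i.+1)) ==> ((y j == x j') && (y j' == op (x j) (x j')))]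
  && [forall j : 'I_m, ((val j != i) && (val j != i.+1)) ==> (y j == x j)].

Definition step_rel (T : finType) (op : T -> T -> T) (m : nat) (l : braid_letter)
  (x y : {ffun 'I_m -> T}) : bool :=
  if l.2 then @sigma_rel T op m l.1 x y else @sigma_rel T op m l.1 y x.

(** A coloring of the closed braid diagram: colors of the m strands at each of
    the (size w).+1 levels between crossings, with the last level identified
    with the first (closure); consecutive levels related by the crossing rule.
    These are exactly the colorings of the arcs of the closed-braid diagram. *)
Definition is_coloring (T : finType) (op : T -> T -> T) (m : nat)
  (w : seq braid_letter) (c : {ffun 'I_(size w).+1 -> {ffun 'I_m -> T}}) : bool :=
  (c ord_max == c ord0) &&
  [forall k : 'I_(size w),
     @step_rel T op m (nth (0, true) w k) (c (widen_ord (leqnSn _) k)) (c (lift ord0 k))].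

Definition Col (T : finType) (op : T -> T -> T) (m : nat) (w : seq braid_letter) : nat :=
  #|[set c : {ffun 'I_(size w).+1 -> {ffun 'I_m -> T}} | @is_coloring T op m w c]|.

Definition col_equiv (T T' : finType) (op : T -> T -> T) (op' : T' -> T' -> T') : Prop :=
  forall (m : nat) (w : seq braid_letter), is_knot_braid m w -> Col op m w = Col op' m w.

(* Main.v *)
Require Import Defs.
From mathcomp Require Import all_boot.
Set Implicit Arguments. Unset Strict Implicit. Unset Printing Implicit Defensive.

Section Prod.
Variables (T1 T2 : finType) (op1 : T1 -> T1 -> T1) (op2 : T2 -> T2 -> T2).

Definition fstf m (x : {ffun 'I_m -> (T1 * T2)%type}) : {ffun 'I_m -> T1} := [ffun j => (x j).1].
Definition sndf m (x : {ffun 'I_m -> (T1 * T2)%type}) : {ffun 'I_m -> T2} := [ffun j => (x j).2].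

Lemma eq_split m (x y : {ffun 'I_m -> (T1 * T2)%type}) :
  (x == y) = (fstf x == fstf y) && (sndf x == sndf y).
Proof.
apply/eqP/andP => [->|[/eqP a /eqP b]]; first by rewrite !eqxx.
apply/ffunP => j; move/ffunP: a => /(_ j); move/ffunP: b => /(_ j).
rewrite !ffunE => b a.
by rewrite [x j]surjective_pairing a b -surjective_pairing.
Qed.

Lemma sigma_prod m i (x y : {ffun 'I_m -> (T1 * T2)%type}) : sigma_rel (prod_op op1 op2) i x y =
  sigma_rel op1 i (fstf x) (fstf y) && sigma_rel op2 i (sndf x) (sndf y).
Proof.
rewrite /sigma_rel.
apply/andP/andP => [[/forallP H1 /forallP H2]|[/andP[/forallP A1 /forallP A2] /andP[/forallP B1 /forallP B2]]].
- split; apply/andP; split; apply/forallP=> j; try apply/forallP => j'.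
  + move: (forallP (H1 j) j') => /implyP H; apply/implyP=> /H /andP[/eqP e1 /eqP e2].
    by rewrite !ffunE e1 e2 /prod_op /= !eqxx.
  + move: (H2 j) => /implyP H; apply/implyP=> /H /eqP e1.
    by rewrite !ffunE e1 /prod_op /= !eqxx.
  + move: (forallP (H1 j) j') => /implyP H; apply/implyP=> /H /andP[/eqP e1 /eqP e2].
    by rewrite !ffunE e1 e2 /prod_op /= !eqxx.
  + move: (H2 j) => /implyP H; apply/implyP=> /H /eqP e1.
    by rewrite !ffunE e1 /prod_op /= !eqxx.
- split; apply/forallP=> j; try apply/forallP => j'.
  + apply/implyP=> h.
    have/andP[a b] := implyP (forallP (A1 j) j') h.
    have/andP[c d] := implyP (forallP (B1 j) j') h.
    rewrite !ffunE in a b c d.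
    move/eqP: a => a; move/eqP: b => b; move/eqP: c => c; move/eqP: d => d.
    apply/andP; split; apply/eqP.
    * by rewrite [y j]surjective_pairing a c -surjective_pairing.
    * by rewrite [y j']surjective_pairing b d.
  + apply/implyP=> h.
    have/eqP a := implyP (A2 j) h.
    have/eqP c := implyP (B2 j) h.
    rewrite !ffunE in a c.
    by apply/eqP; rewrite [y j]surjective_pairing a c -surjective_pairing.
Qed.

Lemma step_prod m l (x y : {ffun 'I_m -> (T1 * T2)%type}) : step_rel (prod_op op1 op2) l x y =
  step_rel op1 l (fstf x) (fstf y) && step_rel op2 l (sndf x) (sndf y).
Proof. by rewrite /step_rel; case: l.2; rewrite sigma_prod. Qed.

Definition splitc m n (c : {ffun 'I_n -> {ffun 'I_m -> (T1 * T2)%type}}) :=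
  ([ffun k => fstf (c k)], [ffun k => sndf (c k)]).

Definition mergec m n (c1 : {ffun 'I_n -> {ffun 'I_m -> T1}})
  (c2 : {ffun 'I_n -> {ffun 'I_m -> T2}}) : {ffun 'I_n -> {ffun 'I_m -> (T1 * T2)%type}} :=
  [ffun k => [ffun j => (c1 k j, c2 k j)]].

Lemma splitK m n : cancel (@splitc m n) (fun p => mergec p.1 p.2).
Proof.
move=> c; apply/ffunP => k; apply/ffunP => j.
by rewrite /mergec /splitc /= !ffunE /fstf /sndf ?ffunE -surjective_pairing.
Qed.

Lemma mergeK m n c1 c2 : @splitc m n (mergec c1 c2) = (c1, c2).
Proof.
rewrite /splitc; congr pair; apply/ffunP => k; apply/ffunP => j;
by rewrite !ffunE /mergec ?ffunE.
Qed.

Lemma col_split m w c : @is_coloring _ (prod_op op1 op2) m w c =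
  is_coloring op1 (splitc c).1 && is_coloring op2 (splitc c).2.
Proof.
rewrite /is_coloring /splitc /= !ffunE eq_split.
apply/andP/andP => [[/andP[a b] /forallP H]|[/andP[a /forallP H1] /andP[b /forallP H2]]].
- split; apply/andP; split => //; apply/forallP => k; move: (H k);
  by rewrite step_prod !ffunE => /andP[].
- split; first by rewrite a b.
  by apply/forallP => k; rewrite step_prod; move: (H1 k) (H2 k); rewrite !ffunE => -> ->.
Qed.

Lemma Col_prod m w : Col (prod_op op1 op2) m w = Col op1 m w * Col op2 m w.
Proof.
rewrite /Col -cardsX -(card_imset _ (can_inj (@splitK m (size w).+1))).
congr (#|pred_of_set _|); apply/setP => [[c1 c2]].
rewrite !inE /=; apply/imsetP/andP => [[c]|[h1 h2]].
- rewrite inE col_split => /andP[h1 h2] [-> ->]; by rewrite ?inE h1 h2.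
- exists (mergec c1 c2); last by rewrite mergeK.
  by rewrite inE col_split mergeK h1 h2.
Qed.

End Prod.

Theorem lemma5p1 (T1 T1' T2 T2' : finType)
  (op1 : T1 -> T1 -> T1) (op1' : T1' -> T1' -> T1')
  (op2 : T2 -> T2 -> T2) (op2' : T2' -> T2' -> T2') :
  is_quandle op1 -> is_quandle op1' -> is_quandle op2 -> is_quandle op2' ->
  col_equiv op1 op1' -> col_equiv op2 op2' ->
  col_equiv (prod_op op1 op2) (prod_op op1' op2').
Proof.
move=> _ _ _ _ E1 E2 m w K.
by rewrite !Col_prod E1 // E2.
Qed.
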